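(* Let $n\ge 1$ and consider the transformation $(u_1,\ldots,u_n)\mapsto(x_1,\ldots,x_n)$ given by $$x_i=\frac{\sin u_i}{\cos u_{i+1}}\quad(1\le i\le n),$$ with indices taken cyclically so that $u_{n+1}:=u_1$, defined at points where all $\cos u_i\neq 0$. Then its Jacobian determinant is $$\frac{\partial(x_1,\ldots,x_n)}{\partial(u_1,\ldots,u_n)}=1\pm (x_1x_2\cdots x_n)^2,$$ where the sign is $-$ if $n$ is even and $+$ if $n$ is odd. *)

(* Defs.v *)
From HB Require Import structures.
From mathcomp Require Import all_boot all_order all_algebra.
From mathcomp Require Import all_classical all_reals all_analysis.
Set Implicit Arguments. Unset Strict Implicit. Unset Printing Implicit Defensive.
Import Order.TTheory GRing.Theory Num.Theory.
Local Open Scope ring_scope.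

Definition sincos_map (R : realType) (n : nat) (u : 'rV[R]_n) : 'rV[R]_n :=
  \row_(i < n) (sin (u 0 i) / cos (u 0 (ordS i))).

(* Main.v *)
Require Import Defs.
From HB Require Import structures.
From mathcomp Require Import all_boot all_order all_algebra.
From mathcomp Require Import all_classical all_reals all_analysis.
From mathcomp Require Import ring zify.
Import Order.TTheory GRing.Theory Num.Theory.
Import numFieldNormedType.Exports.
Local Open Scope ring_scope.
Lemma ordS_val m (x : 'I_m.+2) :
  nat_of_ord (ordS x) = if nat_of_ord x == m.+1 then 0%N else (nat_of_ord x).+1.
Proof.
rewrite /=; case: eqP => [->|h]; first by rewrite modnn.
rewrite modn_small //; have := ltn_ord x; lia.
Qed.

Lemma eq_ordE n (x y : 'I_n) : (x == y) = (nat_of_ord x == nat_of_ord y).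
Proof. by []. Qed.

Ltac kill := move=> *; repeat (case: ifP => /eqP ?); repeat (case: eqP => ?); rewrite ?mul0r ?mul1r ?add0r ?addr0 //; try (exfalso; lia).

Lemma det_cyc (R : comRingType) m (a b : 'I_m.+2 -> R) :
  \det (\matrix_(j, k) ((j == k)%:R * a k + (j == ordS k)%:R * b k)) =
  \prod_k a k + (-1) ^+ m.+1 * \prod_k b k.
Proof.
set A := \matrix_(j, k) _.
have T1 : \det (row' ord0 (col' ord0 A)) = \prod_(i < m.+1) a (lift ord0 i).
  change (\det (row' ord0 (col' ord0 A) : 'M[R]_(m.+1)) = \prod_(i < m.+1) a (lift ord0 i)).
  rewrite det_trig; last first.
    apply/is_trig_mxP => i j ij; rewrite !mxE !eq_ordE ordS_val !lift0.
    have := ltn_ord j; have := ltn_ord i; kill.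
  apply: eq_bigr => i _; rewrite !mxE !eq_ordE ordS_val !lift0.
  have := ltn_ord i; kill.
have T2 : \det (row' ord0 (col' ord_max A)) =
    \prod_(i < m.+1) b (widen_ord (leqnSn _) i).
  change (\det (row' ord0 (col' ord_max A) : 'M[R]_(m.+1)) = \prod_(i < m.+1) b (widen_ord (leqnSn _) i)).
  rewrite -det_tr det_trig; last first.
    apply/is_trig_mxP => i j ij; rewrite !mxE !eq_ordE ordS_val !lift0 !lift_max.
    have := ltn_ord j; have := ltn_ord i; kill.
  apply: eq_bigr => i _; rewrite !mxE !eq_ordE ordS_val !lift0 !lift_max.
  have := ltn_ord i; kill.
  by congr (b _); apply: val_inj; rewrite /= /bump ltnNge -ltnS (ltn_ord i).
rewrite (expand_det_row A ord0) (bigD1 ord0) //= (bigD1 ord_max) //= big1 ?addr0; last first.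
  move=> j /andP[j0 jmax]; rewrite mxE !eq_ordE ordS_val.
  move: j0 jmax; rewrite !eq_ordE /= => j0 jmax.
  rewrite (negbTE jmax) eq_sym (negbTE j0) /=; by rewrite !mul0r addr0 mul0r.
rewrite !mxE !eq_ordE ordS_val /= /cofactor T1 T2 modnn eqxx.
have -> : (@nat_of_ord m.+2 ord0 + @nat_of_ord m.+2 ord0 = 0)%N by [].
have -> : (@nat_of_ord m.+2 ord0 + @nat_of_ord m.+2 ord_max = m.+1)%N by [].
rewrite [\prod_(k < m.+2) a k]big_ord_recl [\prod_(k < m.+2) b k]big_ord_recr /=.
rewrite !mul1r !mul0r add0r addr0.
congr (_ + _); by rewrite mulrCA [b ord_max * _]mulrC.
Qed.
Section A.
Variable R : realType.
Variable n : nat.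

Lemma coord_lin (i : 'I_n) : linear (fun y : 'rV[R]_n => y 0 i).
Proof. by move=> a y z; rewrite !mxE. Qed.

Definition coordL (i : 'I_n) : {linear 'rV[R]_n -> R} :=
  HB.pack (fun y : 'rV[R]_n => y 0 i) (GRing.isLinear.Build _ _ _ _ _ (coord_lin i)).

Lemma diff_hcoord (h : R -> R) (x : 'rV[R]_n) i :
  derivable h (x 0 i) 1 -> differentiable (fun y : 'rV[R]_n => h (y 0 i)) x.
Proof.
move=> dh; apply: (differentiable_comp (f := fun y : 'rV[R]_n => y 0 i) (g := h)).
  exact: differentiable_coord.
exact/derivable1_diffP.
Qed.

Lemma D_hcoord (h : R -> R) (x v : 'rV[R]_n) i :
  derivable h (x 0 i) 1 ->
  'D_v (fun y : 'rV[R]_n => h (y 0 i)) x = v 0 i * h^`()%classic (x 0 i).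
Proof.
move=> dh; rewrite deriveE; last exact: diff_hcoord.
rewrite (diff_comp (f := fun y : 'rV[R]_n => y 0 i) (g := h)); last first.
- exact/derivable1_diffP.
- exact: differentiable_coord.
rewrite /= deriv1E //.
have -> : 'd (fun y : 'rV[R]_n => y 0 i) x = coordL i :> ('rV[R]_n -> R).
  apply: (diff_lin (f := coordL i)); exact: coord_continuous.
by [].
Qed.

Definition gk (k : 'I_n) (x : 'rV[R]_n) : R := sin (x 0 k) / cos (x 0 (ordS k)).

Lemma sincosE : @sincos_map R n = fun x => \sum_(k < n) gk k x *: (delta_mx 0 k : 'rV[R]_n).
Proof.
apply: funext => x; apply/rowP => j; rewrite !mxE summxE.
rewrite (bigD1 j) //= big1 ?addr0.
  by rewrite !mxE !eqxx mulr1.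
by move=> k kj; rewrite !mxE eqxx eq_sym (negbTE kj) mulr0.
Qed.

Variable u : 'rV[R]_n.
Hypothesis hcos : forall i : 'I_n, cos (u 0 i) != 0.

Lemma diff_gk k : differentiable (gk k) u.
Proof.
apply: differentiableM.
  exact/diff_hcoord/derivable_sin.
apply: differentiableV; last exact: hcos.
exact/diff_hcoord/derivable_cos.
Qed.

Lemma diff_sc : differentiable (@sincos_map R n) u.
Proof.
rewrite sincosE.
have -> : (fun x => \sum_(k < n) gk k x *: (delta_mx 0 k : 'rV[R]_n)) =
   \sum_(k < n) (fun x => gk k x *: (delta_mx 0 k : 'rV[R]_n)).
  by rewrite fct_sumE.
apply: differentiable_sum => k; apply: differentiableZl; exact: diff_gk.
Qed.

Lemma derive1_sin (x : R) : (@sin R)^`()%classic x = cos x.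
Proof. by rewrite derive1E derive_val. Qed.
Lemma derive1_cos (x : R) : (@cos R)^`()%classic x = - sin x.
Proof. by rewrite derive1E derive_val. Qed.

Lemma D_gk k v : 'D_v (gk k) u =
  sin (u 0 k) * (- (cos (u 0 (ordS k)))^-2 * (v 0 (ordS k) * - sin (u 0 (ordS k))))
  + (cos (u 0 (ordS k)))^-1 * (v 0 k * cos (u 0 k)).
Proof.
have -> : gk k = (fun x => sin (x 0 k)) * (fun x => (cos (x 0 (ordS k)))^-1).
  by apply: funext => x.
rewrite deriveM; last 2 first.
- exact/diff_derivable/diff_hcoord/derivable_sin.
- apply: diff_derivable; apply: differentiableV; last exact: hcos.
  exact/diff_hcoord/derivable_cos.
rewrite (deriveV (f := fun x : 'rV[R]_n => cos (x 0 (ordS k)))); last 2 first.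
- exact: hcos.
- exact/diff_derivable/diff_hcoord/derivable_cos.
rewrite (D_hcoord (@cos R)); last exact: derivable_cos.
rewrite (D_hcoord (@sin R)); last exact: derivable_sin.
by rewrite derive1_sin derive1_cos.
Qed.

Lemma Jentry j k : jacobian (@sincos_map R n) u j k =
  (j == k)%:R * (cos (u 0 k) / cos (u 0 (ordS k))) +
  (j == ordS k)%:R * (sin (u 0 k) * sin (u 0 (ordS k)) / cos (u 0 (ordS k)) ^+ 2).
Proof.
rewrite /jacobian mxE -deriveE; last exact: diff_sc.
rewrite derive_mx; last by apply: diff_derivable; exact: diff_sc.
rewrite mxE.
have -> : (fun t => sincos_map t 0 k) = gk k by apply: funext => x; rewrite mxE.
rewrite D_gk !mxE eqxx /=.
rewrite [ordS k == j]eq_sym [k == j]eq_sym.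
ring.
Qed.
End A.

Lemma prod_ordS (R : comRingType) n (F : 'I_n -> R) :
  \prod_(k < n) F (ordS k) = \prod_(k < n) F k.
Proof. by rewrite [RHS](reindex_inj (@ordS_inj n)). Qed.

Theorem lemma1 (R : realType) (n : nat) (hn : (0 < n)%N) (u : 'rV[R]_n)
  (hcos : forall i : 'I_n, cos (u 0 i) != 0) :
  \det (jacobian (@sincos_map R n) u) =
  (if odd n then 1 + (\prod_(i < n) sincos_map u 0 i) ^+ 2
   else 1 - (\prod_(i < n) sincos_map u 0 i) ^+ 2).
Proof.
have EJ : jacobian (@sincos_map R n) u =
  \matrix_(j, k) ((j == k)%:R * (cos (u 0 k) / cos (u 0 (ordS k))) +
  (j == ordS k)%:R * (sin (u 0 k) * sin (u 0 (ordS k)) / cos (u 0 (ordS k)) ^+ 2)).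
  by apply/matrixP => j k; rewrite Jentry // mxE.
have Px : \prod_(i < n) sincos_map u 0 i = \prod_(i < n) (sin (u 0 i) / cos (u 0 i)).
  under eq_bigr do rewrite mxE.
  by rewrite !prodf_div (@prod_ordS _ _ (fun k => cos (u 0 k))).
have Pc : \prod_(i < n) cos (u 0 i) != 0 by apply/prodf_neq0 => i _.
have Pa : \prod_(k < n) (cos (u 0 k) / cos (u 0 (ordS k))) = 1.
  by rewrite prodf_div (@prod_ordS _ _ (fun k => cos (u 0 k))) divff.
have Pb : \prod_(k < n) (sin (u 0 k) * sin (u 0 (ordS k)) / cos (u 0 (ordS k)) ^+ 2)
   = (\prod_(i < n) sincos_map u 0 i) ^+ 2.
  transitivity (\prod_(k < n) (sincos_map u 0 k * (sin (u 0 (ordS k)) / cos (u 0 (ordS k))))).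
    by apply: eq_bigr => k _; rewrite mxE expr2 invfM; ring.
  by rewrite big_split /= (@prod_ordS _ _ (fun k => sin (u 0 k) / cos (u 0 k))) -Px expr2.
rewrite EJ; case: n hn u hcos EJ Px Pc Pa Pb => [//|[|m]] _ u hcos EJ Px Pc Pa Pb.
- rewrite det_mx11 mxE /=.
  by rewrite !mul1r -Pb -{1}Pa !big_ord1.
- rewrite det_cyc Pa Pb /= -signr_odd /=.
  by case: (odd m); rewrite /= ?expr0 ?expr1 ?mul1r ?mulN1r.
Qed.
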